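(* Let $\mathbb{T}$ be a geometric theory over $\Sigma$, let $\{\mathbf{x}\mid\phi\}$ and $\{\mathbf{x},\mathbf{y}\mid\psi\}$ be formulas in context, and let $\mathbf{a}$ be a tuple of pairwise distinct elements of $\mathbb{S}$ of the same length as $\mathbf{y}$. Then the stabilization (with respect to the action $\theta$) of the basic open subset \[[\![\{\mathbf{x},\mathbf{y}\mid\psi\},\mathbf{a}]\!]=\{(\mathbf{M},[\mathbf{b}]):([\mathbf{b}],[\mathbf{a}])\in[\![\mathbf{x},\mathbf{y}\mid\phi\wedge\psi]\!]^{\mathbf{M}}\}\subseteq[\![\mathbf{x}\mid\phi]\!]\] is the definable subset $[\![\mathbf{x}\mid\phi\wedge\exists\mathbf{y}\,\psi]\!]\subseteq[\![\mathbf{x}\mid\phi]\!]$.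
   Context: $\Sigma$ is a single-sorted first-order signature with equality, $\kappa\geq|\Sigma|+\aleph_0$ an infinite cardinal, $\mathbb{S}$ a fixed set of cardinality at least $\kappa$. $M_{\mathbb{T}}$ is the set of $\mathbb{T}$-models whose underlying set is a quotient of a subset of $\mathbb{S}$ (elements written $[a]$), and $I_{\mathbb{T}}$ the set of isomorphisms between them. For a formula in context $\{\mathbf{x}\mid\phi\}$, $[\![\mathbf{x}\mid\phi]\!]=\{(\mathbf{M},[\mathbf{b}]):\mathbf{M}\in M_{\mathbb{T}},[\mathbf{b}]\in\phi^{\mathbf{M}}\}$, with the action $\theta(\mathbf{f}:\mathbf{M}\to\mathbf{N},(\mathbf{M},[\mathbf{b}]))=(\mathbf{N},\mathbf{f}([\mathbf{b}]))$ of $I_{\mathbb{T}}$. A subset is stable if it is closed under this action, and the stabilization of a subset is the least stable subset containing it. *)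

(* Defs.v *)
From mathcomp Require Import all_boot.
Set Implicit Arguments. Unset Strict Implicit. Unset Printing Implicit Defensive.

Record signature := Signature {
  funsym : Type; relsym : Type;
  farity : funsym -> nat; rarity : relsym -> nat }.

(** Connectives: =, relations, T, binary /\, arbitrary (set-indexed)
    disjunctions (bottom = empty disjunction), and existential
    quantification over a tuple of fresh variables appended to the context. *)
Inductive term (Σ : signature) (n : nat) : Type :=
| tvar : 'I_n -> term Σ n
| tapp : forall f : funsym Σ, ('I_(farity f) -> term Σ n) -> term Σ n.

Inductive formula (Σ : signature) : nat -> Type :=
| fEq : forall n, term Σ n -> term Σ n -> formula Σ n
| fRel : forall n (r : relsym Σ), ('I_(rarity r) -> term Σ n) -> formula Σ n
| fTop : forall n, formula Σ n
| fAnd : forall n, formula Σ n -> formula Σ n -> formula Σ n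
| fDisj : forall n (I : Type), (I -> formula Σ n) -> formula Σ n
| fEx : forall n k, formula Σ (n + k) -> formula Σ n.

Arguments tvar {Σ n} i.
Arguments tapp {Σ n} f args.
Arguments fEq {Σ n} t u.
Arguments fRel {Σ n} r args.
Arguments fTop {Σ} n.
Arguments fAnd {Σ n} φ ψ.
Arguments fDisj {Σ n I} fs.
Arguments fEx {Σ n k} ψ.

Definition lift_ren n p k (ρ : 'I_n -> 'I_p) : 'I_(n + k) -> 'I_(p + k) :=
  fun i => match split i with inl j => lshift k (ρ j) | inr j => rshift p j end.

Fixpoint trename Σ n p (ρ : 'I_n -> 'I_p) (t : term Σ n) : term Σ p :=
  match t with
  | tvar i => tvar (ρ i)
  | tapp f args => tapp f (fun i => trename ρ (args i))
  end.

Fixpoint frename Σ n (φ : formula Σ n) {struct φ} :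
    forall p, ('I_n -> 'I_p) -> formula Σ p :=
  match φ in formula _ n return forall p, ('I_n -> 'I_p) -> formula Σ p with
  | @fEq _ n t u => fun p ρ => fEq (trename ρ t) (trename ρ u)
  | @fRel _ n r args => fun p ρ => fRel r (fun i => trename ρ (args i))
  | @fTop _ n => fun p ρ => fTop p
  | @fAnd _ n φ1 φ2 => fun p ρ => fAnd (frename φ1 ρ) (frename φ2 ρ)
  | @fDisj _ n J fs => fun p ρ => fDisj (fun i => frename (fs i) ρ)
  | @fEx _ n k ψ => fun p ρ => fEx (frename ψ (@lift_ren _ _ k ρ))
  end.

Definition wk Σ n m (φ : formula Σ n) : formula Σ (n + m) :=
  frename φ (fun i => lshift m i).
Arguments wk {Σ n} m φ.

Record sequent (Σ : signature) := Sequent {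
  sctx : nat; shyp : formula Σ sctx; sconc : formula Σ sctx }.
Definition theory (Σ : signature) := sequent Σ -> Prop.

(** Σ-structures whose underlying set is a quotient of a subset of S:
    the underlying set is a set [car] of blocks (equivalence classes),
    i.e. nonempty pairwise disjoint subsets of S; the class of a ∈ S is
    the block containing a, written [a]. *)
Record structure (Σ : signature) (S : Type) := Structure {
  car : (S -> Prop) -> Prop;
  car_inhab : forall C, car C -> exists s, C s;
  car_disj : forall C D s, car C -> car D -> C s -> D s -> C = D;
  fint : forall f : funsym Σ, ('I_(farity f) -> {C | car C}) -> {C | car C};
  rint : forall r : relsym Σ, ('I_(rarity r) -> {C | car C}) -> Prop }.

Arguments car {Σ S} s _ : rename.
Arguments fint {Σ S} s f _ : rename.
Arguments rint {Σ S} s r _ : rename.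

Definition carrier Σ S (M : structure Σ S) := {C | car M C}.

Definition concat (X : Type) n k (e : 'I_n -> X) (d : 'I_k -> X) : 'I_(n + k) -> X :=
  fun i => match split i with inl j => e j | inr j => d j end.

Fixpoint teval Σ S (M : structure Σ S) n (e : 'I_n -> carrier M) (t : term Σ n)
    : carrier M :=
  match t with
  | tvar i => e i
  | tapp f args => fint M f (fun i => teval e (args i))
  end.

Fixpoint sat Σ S (M : structure Σ S) n (φ : formula Σ n) {struct φ} :
    ('I_n -> carrier M) -> Prop :=
  match φ in formula _ n return ('I_n -> carrier M) -> Prop with
  | @fEq _ _ t u => fun e => teval e t = teval e u
  | @fRel _ _ r args => fun e => rint M r (fun i => teval e (args i))
  | @fTop _ _ => fun _ => True
  | @fAnd _ _ a b => fun e => sat a e /\ sat b e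
  | @fDisj _ _ J fs => fun e => exists i, sat (fs i) e
  | @fEx _ _ k ψ => fun e => exists d : 'I_k -> carrier M, sat ψ (concat e d)
  end.

Definition is_model Σ S (T : theory Σ) (M : structure Σ S) : Prop :=
  forall s, T s -> forall e : 'I_(sctx s) -> carrier M, sat (shyp s) e -> sat (sconc s) e.

Definition is_iso Σ S (M N : structure Σ S) (f : carrier M -> carrier N) : Prop :=
  bijective f /\
  (forall g args, f (fint M g args) = fint N g (f \o args)) /\
  (forall r args, rint M r args <-> rint N r (f \o args)).

Definition point Σ S n := {M : structure Σ S & 'I_n -> carrier M}.

Definition definable Σ S (T : theory Σ) n (φ : formula Σ n) : point Σ S n -> Prop :=
  fun p => is_model T (projT1 p) /\ sat φ (projT2 p).

Definition stable Σ S (T : theory Σ) n (X : point Σ S n -> Prop) : Prop :=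
  forall (M N : structure Σ S) (f : carrier M -> carrier N) (b : 'I_n -> carrier M),
    is_model T M -> is_model T N -> is_iso f ->
    X (existT _ M b) -> X (existT _ N (f \o b)).

Definition stabilization Σ S (T : theory Σ) n (A X : point Σ S n -> Prop)
    : point Σ S n -> Prop :=
  fun p => forall V : point Σ S n -> Prop, stable T V ->
    (forall q, X q -> V q) -> (forall q, V q -> A q) -> V p.

(** Basic open [[{x,y | ψ}, a]] =
    {(M,[b]) : ([b],[a]) ∈ [[x,y | φ ∧ ψ]]^M}; [a_i] is the block of M
    containing a_i (so in particular each a_i lies in the underlying subset). *)
Definition basic_open Σ S (T : theory Σ) n m (φ : formula Σ n)
    (ψ : formula Σ (n + m)) (a : 'I_m -> S) : point Σ S n -> Prop :=
  fun p => is_model T (projT1 p) /\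
    exists c : 'I_m -> carrier (projT1 p),
      (forall i, sval (c i) (a i)) /\
      sat (fAnd (wk m φ) ψ) (concat (projT2 p) c).

(* Main.v *)
Require Import Defs.
From mathcomp Require Import all_boot.
From mathcomp Require Import zify.
From Stdlib Require Import FunctionalExtensionality ProofIrrelevance ClassicalEpsilon.

Lemma teval_iso Σ S (M N : structure Σ S) (f : carrier M -> carrier N) n
  (e : 'I_n -> carrier M) t :
  (forall g args, f (fint M g args) = fint N g (f \o args)) ->
  f (teval e t) = teval (f \o e) t.
Proof.
move=> Hf; elim: t => [i|g args IH] //=.
rewrite Hf; congr (fint N g); apply: functional_extensionality => i /=; exact: IH.
Qed.

Lemma sat_iso Σ S (M N : structure Σ S) (f : carrier M -> carrier N) :
  is_iso f -> forall n (φ : formula Σ n) e, sat φ e -> sat φ (f \o e).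
Proof.
case=> _ [Hf Hr] n φ; elim: φ => {n} /=.
- move=> n t u e H. by rewrite -!(@teval_iso _ _ _ _ f _ e _ Hf) H.
- move=> n r args e H. apply (proj1 (Hr _ _)) in H.
  suff <- : (f \o (fun i => teval e (args i))) = (fun i => teval (f \o e) (args i)) by [].
  apply: functional_extensionality => i /=; exact: teval_iso.
- done.
- move=> n a IHa b IHb e [Ha Hb]; split; auto.
- move=> n I fs IH e [i Hi]; exists i; auto.
- move=> n k ψ IH e [d Hd]; exists (f \o d).
  have -> : concat (f \o e) (f \o d) = f \o concat e d.
    apply: functional_extensionality => i; rewrite /concat /=; by case: split.
  exact: IH.
Qed.

Lemma teval_ren Σ S (M : structure Σ S) n p (ρ : 'I_n -> 'I_p) (e : 'I_p -> carrier M) t :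
  teval e (trename ρ t) = teval (e \o ρ) t.
Proof.
elim: t => [i|g args IH] //=.
congr (fint M g); apply: functional_extensionality => i /=; exact: IH.
Qed.

Lemma concat_lift (X : Type) n p k (ρ : 'I_n -> 'I_p) (e : 'I_p -> X) (d : 'I_k -> X) :
  concat e d \o @lift_ren n p k ρ = concat (e \o ρ) d.
Proof.
apply: functional_extensionality => i; rewrite /concat /lift_ren /=.
case: (split i) => j.
- by have /= -> := @unsplitK p k (inl (ρ j)).
- by have /= -> := @unsplitK p k (inr j).
Qed.

Lemma sat_ren Σ S (M : structure Σ S) n (φ : formula Σ n) :
  forall p (ρ : 'I_n -> 'I_p) (e : 'I_p -> carrier M), sat (frename φ ρ) e <-> sat φ (e \o ρ).
Proof.
elim: φ => {n} /=.
- move=> n t u p ρ e; by rewrite !teval_ren.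
- move=> n r args p ρ e.
  have -> : (fun i => teval e (trename ρ (args i))) = (fun i => teval (e \o ρ) (args i)) => //.
  apply: functional_extensionality => i; exact: teval_ren.
- done.
- move=> n a IHa b IHb p ρ e; by rewrite IHa IHb.
- move=> n I fs IH p ρ e; split => -[i Hi]; exists i; by apply/IH.
- move=> n k ψ IH p ρ e; split => -[d Hd]; exists d.
  + by move/IH: Hd; rewrite concat_lift.
  + by apply/IH; rewrite concat_lift.
Qed.

Lemma iso_inv Σ S (M N : structure Σ S) (f : carrier M -> carrier N) g :
  is_iso f -> cancel f g -> cancel g f -> is_iso g.
Proof.
case=> _ [Hf Hr] fK gK; split; first exact: (Bijective gK fK).
split.
- move=> h args; apply: (can_inj fK); rewrite gK Hf; congr (fint N h).
  apply: functional_extensionality => i /=; by rewrite gK.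
- move=> r args; rewrite Hr.
  have -> : f \o (g \o args) = args => //.
  apply: functional_extensionality => i /=; by rewrite gK.
Qed.

Definition pre (X Y : Type) (f : X -> Y) (y : Y) : option X :=
  match excluded_middle_informative (exists x, y = f x) with
  | left H => Some (proj1_sig (constructive_indefinite_description _ H))
  | right _ => None end.
Arguments pre {X Y} f y.

Lemma pre_some X Y (f : X -> Y) y x : pre f y = Some x -> y = f x.
Proof.
rewrite /pre; case: excluded_middle_informative => [H|H] //.
case=> <-; exact: (proj2_sig (constructive_indefinite_description _ H)).
Qed.

Arguments pre_some {X Y f y x}.

Lemma pre_none X Y (f : X -> Y) y x : pre f y = None -> y <> f x.
Proof.
rewrite /pre; case: excluded_middle_informative => [H|H] // _ E.
by apply: H; exists x.
Qed.

Arguments pre_none {X Y f y} x.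

Lemma bound (S : Type) (u : nat -> S) (Hu : injective u) m (a : 'I_m -> S) :
  exists N0, forall k i, N0 <= k -> u k <> a i.
Proof.
exists (\max_(i < m) (if pre u (a i) is Some k then k.+1 else 0)).
move=> k i Hk E.
have Hle := @leq_bigmax _ (fun i : 'I_m => if pre u (a i) is Some k then k.+1 else 0) i.
case Hp: (pre u (a i)) Hle => [k'|] Hle.
- have E' := pre_some Hp; rewrite E' in E; have kk := Hu _ _ E; subst k'.
  have := leq_trans Hle Hk; by rewrite ltnn.
- exact: (pre_none k Hp).
Qed.

Definition tau (S : Type) (u : nat -> S) m (a : 'I_m -> S) N0 (s : S) : S :=
  match pre u s with
  | Some k => u (N0 + 2 * k)
  | None => match pre a s with Some i => u (N0 + (2 * i + 1)) | None => s end
  end.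

Arguments tau {S} u {m} a N0 s.

Lemma tau_avoid (S : Type) (u : nat -> S) m (a : 'I_m -> S) N0 :
  (forall k i, N0 <= k -> u k <> a i) -> forall s i, tau u a N0 s <> a i.
Proof.
move=> HN s i; rewrite /tau.
case Hp: (pre u s) => [k|]; first by apply: HN; lia.
case Hq: (pre a s) => [j|]; first by apply: HN; lia.
exact: pre_none Hq.
Qed.

Lemma tau_inj (S : Type) (u : nat -> S) (Hu : injective u) m (a : 'I_m -> S)
  (Ha : injective a) N0 : injective (tau u a N0).
Proof.
move=> s s'; rewrite /tau.
case Hp: (pre u s) => [k|]; case Hp': (pre u s') => [k'|].
- move/Hu => E. rewrite (pre_some Hp) (pre_some Hp'); congr u; lia.
- case Hq': (pre a s') => [j'|].
  + move/Hu => E; lia.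
  + move=> E; by have := pre_none (N0 + 2 * k) Hp'; rewrite -E.
- case Hq: (pre a s) => [j|].
  + move/Hu => E; lia.
  + move=> E; by have := pre_none (N0 + 2 * k') Hp; rewrite E.
- case Hq: (pre a s) => [j|]; case Hq': (pre a s') => [j'|].
  + move/Hu => E. rewrite (pre_some Hq) (pre_some Hq'); congr a; apply: val_inj => /=; lia.
  + move=> E; by have := pre_none (N0 + (2 * j + 1)) Hp'; rewrite -E.
  + move=> E; by have := pre_none (N0 + (2 * j' + 1)) Hp; rewrite E.
  + done.
Qed.

Arguments sat_iso {Σ S M N f} Hf {n φ e}.
Arguments iso_inv {Σ S M N f g}.
Arguments sat_ren {Σ S M n φ p ρ e}.
Arguments bound {S u} Hu {m} a.
Arguments tau_inj {S u} Hu {m a} Ha N0.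
Arguments tau_avoid {S u m a N0} HN.

Definition Qb Σ S (M : structure Σ S) m (a : 'I_m -> S) (τ : S -> S)
  (d : 'I_m -> carrier M) (C : S -> Prop) : S -> Prop :=
  fun s => (exists t, C t /\ s = τ t) \/ (exists i, s = a i /\ sval (d i) = C).
Arguments Qb {Σ S M m} a τ d C.

Definition carN Σ S (M : structure Σ S) m (a : 'I_m -> S) (τ : S -> S)
  (d : 'I_m -> carrier M) (D : S -> Prop) : Prop :=
  exists C, car M C /\ D = Qb a τ d C.
Arguments carN {Σ S M m} a τ d D.

Lemma Qb_inj Σ S (M : structure Σ S) m (a : 'I_m -> S) (τ : S -> S)
  (Hτ : injective τ) (Hτa : forall s i, τ s <> a i) (d : 'I_m -> carrier M) C C' :
  car M C -> car M C' -> Qb a τ d C = Qb a τ d C' -> C = C'.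
Proof.
move=> HC HC' E; have [t Ct] := car_inhab HC.
have : Qb a τ d C' (τ t) by rewrite -E; left; exists t.
case=> [[t' [C't E']]|[i [E' _]]].
- have tt := Hτ _ _ E'; subst t'; exact: car_disj HC HC' Ct C't.
- exfalso; exact: Hτa t i E'.
Qed.

Arguments Qb_inj {Σ S M m a τ} Hτ Hτa {d C C'}.

Lemma carN_inhab Σ S (M : structure Σ S) m (a : 'I_m -> S) (τ : S -> S)
  (d : 'I_m -> carrier M) D : carN a τ d D -> exists s, D s.
Proof.
move=> [C [HC ->]]; have [t Ct] := car_inhab HC; exists (τ t); left; by exists t.
Qed.

Lemma carN_disj Σ S (M : structure Σ S) m (a : 'I_m -> S) (Ha : injective a) (τ : S -> S)
  (Hτ : injective τ) (Hτa : forall s i, τ s <> a i) (d : 'I_m -> carrier M) D D' s :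
  carN a τ d D -> carN a τ d D' -> D s -> D' s -> D = D'.
Proof.
move=> [C [HC ->]] [C' [HC' ->]] H1 H2; suff -> : C = C' by [].
case: H1 => [[t [Ct E0]]|[i [E0 Ei]]]; case: H2 => [[t' [C't E]]|[j [E Ej]]]; rewrite E0 in E.
- have tt := Hτ _ _ E; subst t'; exact: car_disj HC HC' Ct C't.
- exfalso; exact: Hτa t j E.
- exfalso; exact: Hτa t' i (esym E).
- have ij := Ha _ _ E; subst j; by rewrite -Ei -Ej.
Qed.

Definition Fm Σ S (M : structure Σ S) m (a : 'I_m -> S) (τ : S -> S)
  (d : 'I_m -> carrier M) (x : carrier M) : {D | carN a τ d D} :=
  exist _ (Qb a τ d (sval x)) (ex_intro _ (sval x) (conj (proj2_sig x) erefl)).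

Arguments Fm {Σ S M m} a τ d x.

Definition Gm Σ S (M : structure Σ S) m (a : 'I_m -> S) (τ : S -> S)
  (d : 'I_m -> carrier M) (y : {D | carN a τ d D}) : carrier M :=
  let H := constructive_indefinite_description _ (proj2_sig y) in
  exist _ (proj1_sig H) (proj1 (proj2_sig H)).

Arguments Gm {Σ S M m} a τ d y.

Lemma FmK Σ S (M : structure Σ S) m (a : 'I_m -> S) (τ : S -> S)
  (Hτ : injective τ) (Hτa : forall s i, τ s <> a i) (d : 'I_m -> carrier M) :
  cancel (Fm a τ d) (Gm a τ d).
Proof.
move=> [C HC]; rewrite /Gm /=.
case: (constructive_indefinite_description _ _) => C' [HC' E] /=.
have E' := Qb_inj Hτ Hτa HC HC' E; subst C'.
congr exist; exact: proof_irrelevance.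
Qed.

Arguments FmK {Σ S M m a τ} Hτ Hτa d.

Lemma GmK Σ S (M : structure Σ S) m (a : 'I_m -> S) (τ : S -> S)
  (d : 'I_m -> carrier M) : cancel (Gm a τ d) (Fm a τ d).
Proof.
move=> [D HD]; rewrite /Gm /Fm /=.
case: (constructive_indefinite_description _ _) => C' [HC' E] /=.
subst D; congr exist; exact: proof_irrelevance.
Qed.

Arguments GmK {Σ S M m a τ} d.

Definition Nst Σ S (M : structure Σ S) m (a : 'I_m -> S) (Ha : injective a) (τ : S -> S)
  (Hτ : injective τ) (Hτa : forall s i, τ s <> a i) (d : 'I_m -> carrier M)
  : structure Σ S :=
  {| car := carN a τ d;
     car_inhab := @carN_inhab Σ S M m a τ d;
     car_disj := @carN_disj Σ S M m a Ha τ Hτ Hτa d;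
     fint := fun g args => Fm a τ d (fint M g (Gm a τ d \o args));
     rint := fun r args => rint M r (Gm a τ d \o args) |}.

Arguments Nst {Σ S M m a} Ha {τ} Hτ Hτa d.

Lemma Fm_iso Σ S (M : structure Σ S) m (a : 'I_m -> S) (Ha : injective a) (τ : S -> S)
  (Hτ : injective τ) (Hτa : forall s i, τ s <> a i) (d : 'I_m -> carrier M) :
  @is_iso Σ S M (Nst Ha Hτ Hτa d) (Fm a τ d).
Proof.
have GF : forall T (h : T -> carrier M), Gm a τ d \o (Fm a τ d \o h) = h.
  move=> T h; apply: functional_extensionality => i /=; exact: FmK.
split; first exact: (Bijective (FmK Hτ Hτa d) (GmK d)).
split.
- move=> g args /=; by rewrite GF.
- move=> r args /=; by rewrite GF.
Qed.

Arguments Fm_iso {Σ S M m a} Ha {τ} Hτ Hτa d.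

Lemma concat_lshift (X : Type) n k (e : 'I_n -> X) (d : 'I_k -> X) :
  concat e d \o (fun i => lshift k i) = e.
Proof.
apply: functional_extensionality => i; rewrite /concat /=.
by have /= -> := @unsplitK n k (inl i).
Qed.

Theorem lemma3p11 (Σ : signature) (S : Type)
  (* an infinite cardinal κ ≥ |Σ| + ℵ0 (represented by a type K) with |S| ≥ κ *)
  (K : Type) (iκ : (funsym Σ + relsym Σ) + nat -> K) (iS : K -> S)
  (Hiκ : injective iκ) (HiS : injective iS)
  (T : theory Σ) (n m : nat) (φ : formula Σ n) (ψ : formula Σ (n + m))
  (a : 'I_m -> S) (Ha : injective a) :
  forall p : point Σ S n,
    stabilization T (definable T φ) (basic_open T φ ψ a) p <->
    definable T (fAnd φ (fEx ψ)) p.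
Proof.
move=> [M b]; split.
- move=> Hst; apply: Hst.
  + move=> M1 N1 f b1 _ HN Hf [_ Hs]; split => //; exact: (sat_iso Hf Hs).
  + move=> [M1 b1] [HM [c [_ [Hw Hψ]]]]; split => //=; split; last by exists c.
    move: Hw; rewrite /wk => /sat_ren; by rewrite concat_lshift.
  + by move=> q [H [H1 _]].
- move=> [HM [Hφ [d Hψ]]] V HV HX HA /=.
  pose u k := iS (iκ (inr k)).
  have Hu : injective u by move=> x y /HiS /Hiκ [].
  have [N0 HN0] := bound Hu a.
  pose τ := tau u a N0.
  have Hτ : injective τ := tau_inj Hu Ha N0.
  have Hτa : forall s i, τ s <> a i := tau_avoid HN0.
  pose N := Nst Ha Hτ Hτa d.
  have HF : @is_iso Σ S M N (Fm a τ d) := Fm_iso Ha Hτ Hτa d.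
  have HG := iso_inv HF (FmK Hτ Hτa d) (GmK d).
  have HN : is_model T N.
    move=> s Ts e He.
    have := HM s Ts _ (sat_iso HG He) => /(sat_iso HF).
    suff -> : Fm a τ d \o (Gm a τ d \o e) = e by [].
    apply: functional_extensionality => i /=; exact: GmK.
  have HB : basic_open T φ ψ a (existT _ N (Fm a τ d \o b)).
    split => //; exists (Fm a τ d \o d); split.
    + move=> i /=; right; by exists i.
    + have -> : concat (Fm a τ d \o b) (Fm a τ d \o d) = Fm a τ d \o concat b d.
        apply: functional_extensionality => i; rewrite /concat /=; by case: split.
      apply: (sat_iso HF); split => //.
      rewrite /wk; apply/sat_ren; by rewrite concat_lshift.
  have := HV N M (Gm a τ d) (Fm a τ d \o b) HN HM HG (HX _ HB).
  suff -> : Gm a τ d \o (Fm a τ d \o b) = b by [].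
  apply: functional_extensionality => i /=; exact: FmK.
Qed.
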